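(* For every integer $k\ge 2$, there is a connected 2-degenerate graph of order $n=5k+1$ with exactly $4^{k}=4^{(n-1)/5}$ inclusion-minimal connected dominating sets; hence the maximum number of minimal connected dominating sets in 2-degenerate graphs of order $n$ is $\Omega(1.3195^n)$.
   Context: A graph is 2-degenerate if there is an ordering $(v_1,\dots,v_n)$ of its vertices such that each $v_i$ has degree at most $2$ in $G[\{v_i,\dots,v_n\}]$. A connected dominating set of a graph $G=(V,E)$ is a set $S\subseteq V$ such that every vertex outside $S$ has a neighbor in $S$ and $G[S]$ is connected; it is (inclusion-)minimal if no proper subset is one. (The witnessing graph $G_2^k$ consists of $k$ disjoint copies of the graph on $\{x_1,x_2,y_1,y_2,z\}$ with edges $x_1x_2$, $x_1y_2$, $x_2y_1$, $zy_1$, $zy_2$, plus a vertex $s$ adjacent to all $x$-vertices of all copies.) *)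

(* Defs.v *)
From mathcomp Require Import all_boot all_order all_algebra.
Set Implicit Arguments. Unset Strict Implicit. Unset Printing Implicit Defensive.

Section Graphs.
Variable T : finType.

Definition simple_graph (e : rel T) : Prop := symmetric e /\ irreflexive e.

Definition connected_graph (e : rel T) : Prop := forall x y : T, connect e x y.

Definition induced (e : rel T) (S : {set T}) : rel T :=
  [rel x y | [&& x \in S, y \in S & e x y]].

Definition induced_connected (e : rel T) (S : {set T}) : bool :=
  [forall x in S, forall y in S, connect (induced e S) x y].

Definition dominating (e : rel T) (S : {set T}) : bool :=
  [forall v, (v \notin S) ==> [exists u in S, e v u]].

Definition connected_dominating (e : rel T) (S : {set T}) : bool :=
  dominating e S && induced_connected e S.

Definition minimal_cds (e : rel T) (S : {set T}) : bool :=
  connected_dominating e S &&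
  [forall S' : {set T}, (S' \proper S) ==> ~~ connected_dominating e S'].

Definition num_minimal_cds (e : rel T) : nat := #|[set S | minimal_cds e S]|.

(* 2-degenerate: an ordering (v_1,...,v_n) of all vertices in which each v_i
   has degree at most 2 in G[{v_i,...,v_n}], i.e. at most 2 neighbours
   among the later vertices (e is irreflexive) *)
Definition two_degenerate (e : rel T) : Prop :=
  exists s : seq T, perm_eq s (enum T) /\
    forall (s1 s2 : seq T) (x : T), s = s1 ++ x :: s2 -> count (e x) s2 <= 2.
End Graphs.

(* Main.v *)
Require Import Defs.
From mathcomp Require Import all_boot all_order all_algebra zify ring lra.
Set Implicit Arguments. Unset Strict Implicit. Unset Printing Implicit Defensive.

Section G.
Variable k' : nat.
Local Notation K := k'.+2.
Local Notation V := 'I_(5 * k'.+2 + 1).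

Definition isS (v : V) : bool := (v : nat) == 5 * K.
Definition radj0 (a b : nat) : bool :=
  [|| (a == 0) && (b == 1), (a == 0) && (b == 3), (a == 1) && (b == 2),
      (a == 2) && (b == 4) | (a == 3) && (b == 4)].
Definition radj a b := radj0 a b || radj0 b a.
Definition fe (u v : V) : bool :=
  (isS u && ~~ isS v && (v %% 5 < 2)) ||
  [&& ~~ isS u, ~~ isS v, u %/ 5 == v %/ 5 & radj0 (u %% 5) (v %% 5)].
Definition edge : rel V := fun u v => fe u v || fe v u.

Lemma svP : 5 * K < 5 * K + 1. Proof. by rewrite addn1. Qed.
Definition sv : V := Ordinal svP.
Definition vtx (i : 'I_K) (r : nat) : V := insubd sv (5 * i + r).
Definition cp (v : V) : 'I_K := inord (v %/ 5).

Lemma val_vtx i r : r < 5 -> (vtx i r : nat) = 5 * i + r.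
Proof.
move=> hr; rewrite /vtx; have -> : nat_of_ord (insubd sv (5 * i + r)) = val (insubd sv (5 * i + r)) by [].
rewrite val_insubd; case: ifP => //; have := ltn_ord i; lia.
Qed.

Lemma isS_vtx i r : r < 5 -> isS (vtx i r) = false.
Proof. move=> hr; rewrite /isS val_vtx //; have := ltn_ord i; lia. Qed.

Lemma isSE v : isS v = (v == sv).
Proof. by rewrite /isS; apply/eqP/eqP => [h|->//]; apply: ord_inj. Qed.

Lemma notS_lt v : ~~ isS v -> v < 5 * K.
Proof. rewrite /isS => /eqP h; have := ltn_ord v; lia. Qed.

Lemma vtxE v : ~~ isS v -> v = vtx (cp v) (v %% 5).
Proof.
move=> h; have hv := notS_lt h; apply: ord_inj.
rewrite val_vtx ?ltn_mod // /cp inordK; lia.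
Qed.

Lemma cp_vtx i r : r < 5 -> cp (vtx i r) = i.
Proof. move=> hr; apply: ord_inj; rewrite /cp val_vtx // inordK; have := ltn_ord i; lia. Qed.

Lemma div_vtx i r : r < 5 -> vtx i r %/ 5 = i.
Proof. move=> hr; rewrite val_vtx //; lia. Qed.
Lemma mod_vtx i r : r < 5 -> vtx i r %% 5 = r.
Proof. move=> hr; rewrite val_vtx //; lia. Qed.

Lemma isS_sv : isS sv. Proof. by rewrite /isS. Qed.

Lemma edge_vtx i j r r' : r < 5 -> r' < 5 ->
  edge (vtx i r) (vtx j r') = (i == j) && radj r r'.
Proof.
move=> hr hr'; rewrite /edge /fe !isS_vtx //= !div_vtx // !mod_vtx //.
rewrite /radj; case: (i =P j) => [->|ne]; first by rewrite eqxx.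
have h : (i : nat) != j by apply/eqP => /ord_inj.
by rewrite (negbTE h) eq_sym (negbTE h).
Qed.

Lemma edge_s_vtx i r : r < 5 -> edge sv (vtx i r) = (r < 2).
Proof.
move=> hr; by rewrite /edge /fe isS_vtx // isS_sv mod_vtx //= !orbF.
Qed.

Lemma edge_sym : symmetric edge.
Proof. by move=> u v; rewrite /edge orbC. Qed.

Lemma radj0_irr a : radj0 a a = false.
Proof. by case: a => [|[|[|[|[|a]]]]]. Qed.

Lemma edge_irr : irreflexive edge.
Proof. by move=> u; rewrite /edge orbb /fe radj0_irr andbN /= !andbF. Qed.


Lemma edge_vtx_any i r v : r < 5 -> edge (vtx i r) v ->
  (isS v && (r < 2)) || [&& ~~ isS v, cp v == i & radj r (v %% 5)].
Proof.
move=> hr; case: (boolP (isS v)) => hv.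
  by move: hv; rewrite isSE => /eqP ->; rewrite edge_sym edge_s_vtx // => ->.
rewrite {1}(vtxE hv) edge_vtx ?ltn_mod // /= eq_sym => /andP[-> ->].
by [].
Qed.

Lemma induced_sym (S : {set V}) : symmetric (induced edge S).
Proof. by move=> u v; rewrite /induced /= edge_sym andbCA. Qed.

Lemma closed_contra (S : {set V}) (C : pred V) c d :
  induced_connected edge S -> c \in S -> d \in S -> C c -> ~~ C d ->
  (forall u v, C u -> induced edge S u v -> C v) -> False.
Proof.
move=> /forallP hc cS dS Cc nCd hcl.
move: (hc c); rewrite cS /= => /forallP /(_ d); rewrite dS /=.
move/connectP => [p pth lst]; move: nCd; rewrite lst => /negP; apply.
elim: p c Cc pth {lst cS} => //= a p IH c Cc /andP[ca pth].
exact: IH (hcl _ _ Cc ca) pth.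
Qed.

Definition opt (o : 'I_4) (r : nat) : bool :=
  match val o with
  | 0 => r < 3
  | 1 => (r < 2) || (r == 3)
  | 2 => [|| r == 0, r == 3 | r == 4]
  | _ => [|| r == 1, r == 2 | r == 4]
  end.

Definition Sf (f : {ffun 'I_K -> 'I_4}) : {set V} :=
  [set v : V | isS v || opt (f (cp v)) (v %% 5)].

Lemma mem_Sf (f : {ffun 'I_K -> 'I_4}) (i : 'I_K) r : r < 5 -> (vtx i r \in Sf f) = opt (f i) r.
Proof. by move=> hr; rewrite inE isS_vtx // cp_vtx // mod_vtx. Qed.

Lemma sv_Sf (f : {ffun 'I_K -> 'I_4}) : sv \in Sf f.
Proof. by rewrite inE isS_sv. Qed.

Lemma dom_local (o : 'I_4) r : r < 5 -> ~~ opt o r ->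
  exists2 r', r' < 5 & opt o r' && radj r r'.
Proof.
case: o => [[|[|[|[|o]]]] ho] //;
case: r => [|[|[|[|[|r]]]]] //= _ _;
first [by exists 0 | by exists 1 | by exists 2 | by exists 3 | by exists 4].
Qed.

Lemma Sf_dom (f : {ffun 'I_K -> 'I_4}) : dominating edge (Sf f).
Proof.
apply/forallP => v; apply/implyP => vn.
have hv : ~~ isS v by apply: contra vn; rewrite inE => ->.
have hr : v %% 5 < 5 by rewrite ltn_mod.
have hno : ~~ opt (f (cp v)) (v %% 5) by apply: contra vn; rewrite inE => ->; rewrite orbT.
have [r' hr' /andP[o1 o2]] := dom_local hr hno.
apply/existsP; exists (vtx (cp v) r'); rewrite mem_Sf // o1 /=.
by rewrite {1}(vtxE hv) edge_vtx // eqxx.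
Qed.

Definition conn (S : {set V}) u := connect (induced edge S) u sv.

Lemma xcf (f : {ffun 'I_K -> 'I_4}) (i : 'I_K) r : r < 2 -> opt (f i) r -> conn (Sf f) (vtx i r).
Proof.
move=> hr ho; apply: connect1; rewrite /induced /= mem_Sf ?(ltn_trans hr) // ho.
by rewrite sv_Sf edge_sym edge_s_vtx // (ltn_trans hr).
Qed.

Lemma stepf (f : {ffun 'I_K -> 'I_4}) (i : 'I_K) r r' : r < 5 -> r' < 5 -> radj r r' -> opt (f i) r -> opt (f i) r' ->
  conn (Sf f) (vtx i r') -> conn (Sf f) (vtx i r).
Proof.
move=> hr hr' ad o1 o2 c; apply: connect_trans c; apply: connect1.
by rewrite /induced /= !mem_Sf // o1 o2 edge_vtx // eqxx.
Qed.

Ltac go0 E := by apply: xcf => //; rewrite E.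
Ltac go1 E := first [go0 E
  | by apply: (@stepf _ _ _ 0) => //; rewrite ?E //; go0 E
  | by apply: (@stepf _ _ _ 1) => //; rewrite ?E //; go0 E
  | by apply: (@stepf _ _ _ 2) => //; rewrite ?E //; go0 E
  | by apply: (@stepf _ _ _ 3) => //; rewrite ?E //; go0 E
  | by apply: (@stepf _ _ _ 4) => //; rewrite ?E //; go0 E].
Ltac go2 E := first [go1 E
  | by apply: (@stepf _ _ _ 0) => //; rewrite ?E //; go1 E
  | by apply: (@stepf _ _ _ 1) => //; rewrite ?E //; go1 E
  | by apply: (@stepf _ _ _ 2) => //; rewrite ?E //; go1 E
  | by apply: (@stepf _ _ _ 3) => //; rewrite ?E //; go1 E
  | by apply: (@stepf _ _ _ 4) => //; rewrite ?E //; go1 E].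

Lemma Sf_conn_s (f : {ffun 'I_K -> 'I_4}) v : v \in Sf f -> conn (Sf f) v.
Proof.
case: (boolP (isS v)) => hv.
  by move: hv; rewrite isSE => /eqP ->; rewrite /conn connect0.
rewrite (vtxE hv) mem_Sf ?ltn_mod //.
have hr : v %% 5 < 5 by rewrite ltn_mod.
move: (v %% 5) hr => r hr.
move E: (f (cp v)) => o; case: o E => [[|[|[|[|o]]]] ho] E //;
case: r hr => [|[|[|[|[|r]]]]] //= _ _; go2 E.
Qed.

Lemma Sf_cd (f : {ffun 'I_K -> 'I_4}) : connected_dominating edge (Sf f).
Proof.
rewrite /connected_dominating Sf_dom /=.
apply/forallP => x; apply/implyP => xS; apply/forallP => y; apply/implyP => yS.
apply: connect_trans (Sf_conn_s xS) _.
by rewrite (sym_connect_sym (@induced_sym _)); apply: Sf_conn_s.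
Qed.


Lemma dom_any (S : {set V}) i : dominating edge S ->
  exists2 u, u \in S & ~~ isS u && (cp u == i).
Proof.
move=> /forallP hd; case: (boolP (vtx i 4 \in S)) => h4.
  by exists (vtx i 4) => //; rewrite isS_vtx // cp_vtx // eqxx.
move/implyP: (hd (vtx i 4)) => /(_ h4) /existsP [u /andP[uS eu]].
exists u => //; move/edge_vtx_any: eu => /(_ isT) /orP[/andP[_ //]|/and3P[-> -> _]] //.
Qed.

Lemma s_in (S : {set V}) : connected_dominating edge S -> sv \in S.
Proof.
move=> /andP[hd hc]; apply/negPn/negP => ns.
have [c cS /andP[c1 c2]] := dom_any ord0 hd.
have [d dS /andP[d1 d2]] := dom_any (inord 1) hd.
apply: (@closed_contra S [pred u | ~~ isS u && (cp u == ord0)] c d) => //=.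
- by rewrite c1.
- rewrite d1 (eqP d2) /=; apply/eqP => /(congr1 val); rewrite /= inordK //.
move=> u v /andP[u1 /eqP u2] /and3P[_ vS]; rewrite (vtxE u1) u2.
move/edge_vtx_any => /(_ (ltn_mod _ _)) /orP[/andP[vs _]|/and3P[-> -> _] //].
by move: vs ns; rewrite isSE => /eqP <-; rewrite vS.
Qed.

Lemma dom_nbr (S : {set V}) i r : dominating edge S -> 2 <= r < 5 -> vtx i r \notin S ->
  exists2 r', r' < 5 & radj r r' && (vtx i r' \in S).
Proof.
move=> /forallP hd /andP[r2 r5] nS.
move/implyP: (hd (vtx i r)) => /(_ nS) /existsP [u /andP[uS eu]].
move/edge_vtx_any: eu => /(_ r5) /orP[/andP[_]|/and3P[u1 /eqP u2 ad]].
  by rewrite ltnNge r2.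
exists (u %% 5); first by rewrite ltn_mod.
by rewrite ad -u2 -vtxE.
Qed.

Lemma local_closed (S : {set V}) i (R : pred nat) :
  induced_connected edge S -> sv \in S -> (forall r, R r -> 2 <= r < 5) ->
  (forall r r', R r -> vtx i r \in S -> r' < 5 -> radj r r' -> vtx i r' \in S -> R r') ->
  forall r, R r -> vtx i r \in S -> False.
Proof.
move=> hc sS hR hcl r Rr rS.
have /andP[_ r5] := hR r Rr.
apply: (@closed_contra S [pred u | [&& ~~ isS u, cp u == i & R (u %% 5)]] (vtx i r) sv) => //=.
- by rewrite isS_vtx // cp_vtx // mod_vtx // eqxx.
- by rewrite isS_sv.
move=> u v /and3P[u1 /eqP u2 Ru] /and3P[uS vS]; rewrite {1}(vtxE u1) u2.
have /andP[ru2 ru5] := hR _ Ru.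
move/edge_vtx_any => /(_ ru5) /orP[/andP[_]|/and3P[v1 /eqP v2 ad]].
  by rewrite ltnNge ru2.
rewrite v1 v2 eqxx /=; apply: (hcl (u %% 5)) => //.
- by rewrite -u2 -vtxE.
- by rewrite ltn_mod.
- by rewrite -v2 -vtxE.
Qed.

Lemma bool_local (b0 b1 b2 b3 b4 : bool) :
  (b2 || b1 || b4) -> (b3 || b0 || b4) -> (b4 || b2 || b3) ->
  (b4 -> b2 || b3) -> (b2 -> b1 || b4) -> (b3 -> b0 || b4) ->
  (b2 -> b4 -> b1 || b3) -> (b3 -> b4 -> b0 || b2) ->
  (b0 || b1) ->
  [|| b0 && b1 && b2, b0 && b1 && b3, b0 && b3 && b4 | b1 && b2 && b4].
Proof. by case: b0; case: b1; case: b2; case: b3; case: b4; rewrite /is_true /=; intuition discriminate. Qed.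


Ltac clos := match goal with h : is_true ?b, H : is_true (~~ ?b) |- _ => by rewrite h in H end.

Lemma local_opt (S : {set V}) i : connected_dominating edge S ->
  exists o : 'I_4, forall r, r < 5 -> opt o r -> vtx i r \in S.
Proof.
move=> H; have sS := s_in H; move/andP: H => [hd hc].
have D1 : (vtx i 2 \in S) || (vtx i 1 \in S) || (vtx i 4 \in S).
  case: (boolP (vtx i 2 \in S)) => [//|n2].
  have [r' r5 /andP[ad rS]] := dom_nbr hd (isT : 2 <= 2 < 5) n2.
  by move: r' r5 ad rS => [|[|[|[|[|r']]]]] //= _ _ ->; rewrite ?orbT.
have D2 : (vtx i 3 \in S) || (vtx i 0 \in S) || (vtx i 4 \in S).
  case: (boolP (vtx i 3 \in S)) => [//|n3].
  have [r' r5 /andP[ad rS]] := dom_nbr hd (isT : 2 <= 3 < 5) n3.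
  by move: r' r5 ad rS => [|[|[|[|[|r']]]]] //= _ _ ->; rewrite ?orbT.
have D3 : (vtx i 4 \in S) || (vtx i 2 \in S) || (vtx i 3 \in S).
  case: (boolP (vtx i 4 \in S)) => [//|n4].
  have [r' r5 /andP[ad rS]] := dom_nbr hd (isT : 2 <= 4 < 5) n4.
  by move: r' r5 ad rS => [|[|[|[|[|r']]]]] //= _ _ ->; rewrite ?orbT.
have LC := @local_closed S i _ hc sS.
have H1 : (vtx i 4 \in S) -> (vtx i 2 \in S) || (vtx i 3 \in S).
  move=> h; apply/norP => -[n2 n3]; apply: (LC (pred1 4) _ _ 4) => //.
    by move=> r /eqP ->.
  move=> r r'; case: r => [|[|[|[|[|r]]]]] //=; case: r' => [|[|[|[|[|r']]]]] //=;
  move=> _ _ _ _ h'; clos.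
have H2 : (vtx i 2 \in S) -> (vtx i 1 \in S) || (vtx i 4 \in S).
  move=> h; apply/norP => -[n2 n3]; apply: (LC (pred1 2) _ _ 2) => //.
    by move=> r /eqP ->.
  move=> r r'; case: r => [|[|[|[|[|r]]]]] //=; case: r' => [|[|[|[|[|r']]]]] //=;
  move=> _ _ _ _ h'; clos.
have H3 : (vtx i 3 \in S) -> (vtx i 0 \in S) || (vtx i 4 \in S).
  move=> h; apply/norP => -[n2 n3]; apply: (LC (pred1 3) _ _ 3) => //.
    by move=> r /eqP ->.
  move=> r r'; case: r => [|[|[|[|[|r]]]]] //=; case: r' => [|[|[|[|[|r']]]]] //=;
  move=> _ _ _ _ h'; clos.
have H4 : (vtx i 2 \in S) -> (vtx i 4 \in S) -> (vtx i 1 \in S) || (vtx i 3 \in S).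
  move=> h h4; apply/norP => -[n2 n3]; apply: (LC [pred r | (r == 2) || (r == 4)] _ _ 2) => //.
    by move=> r /orP[] /eqP ->.
  move=> r r'; case: r => [|[|[|[|[|r]]]]] //=; case: r' => [|[|[|[|[|r']]]]] //=;
  move=> _ _ _ _ h'; clos.
have H5 : (vtx i 3 \in S) -> (vtx i 4 \in S) -> (vtx i 0 \in S) || (vtx i 2 \in S).
  move=> h h4; apply/norP => -[n2 n3]; apply: (LC [pred r | (r == 3) || (r == 4)] _ _ 3) => //.
    by move=> r /orP[] /eqP ->.
  move=> r r'; case: r => [|[|[|[|[|r]]]]] //=; case: r' => [|[|[|[|[|r']]]]] //=;
  move=> _ _ _ _ h'; clos.
have H6 : (vtx i 0 \in S) || (vtx i 1 \in S).
  apply/norP => -[n0 n1].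
  have LC' := LC [pred r | [|| r == 2, r == 3 | r == 4]].
  have cl : forall r r', [|| r == 2, r == 3 | r == 4] -> vtx i r \in S -> r' < 5 -> radj r r' ->
     vtx i r' \in S -> [|| r' == 2, r' == 3 | r' == 4].
    move=> r r'; case: r => [|[|[|[|[|r]]]]] //=; case: r' => [|[|[|[|[|r']]]]] //=;
    move=> _ _ _ _ h'; clos.
  have hR : forall r, [|| r == 2, r == 3 | r == 4] -> 2 <= r < 5.
    by move=> r; case/or3P => /eqP ->.
  case/orP: D3 => [/orP[] h|h].
  - exact: (LC' hR cl 4).
  - exact: (LC' hR cl 2).
  - exact: (LC' hR cl 3).
have := bool_local D1 D2 D3 H1 H2 H3 H4 H5 H6.
case/or4P => /andP[/andP[a b] c].
- by exists (@Ordinal 4 0 isT) => r; case: r => [|[|[|[|[|r]]]]] //= _ _.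
- by exists (@Ordinal 4 1 isT) => r; case: r => [|[|[|[|[|r]]]]] //= _ _.
- by exists (@Ordinal 4 2 isT) => r; case: r => [|[|[|[|[|r]]]]] //= _ _.
- by exists (@Ordinal 4 3 isT) => r; case: r => [|[|[|[|[|r]]]]] //= _ _.
Qed.


Lemma opt_incl (a b : 'I_4) : (forall r, r < 5 -> opt a r -> opt b r) -> a = b.
Proof.
case: a => [[|[|[|[|a]]]] ha] //; case: b => [[|[|[|[|b]]]] hb] // H;
first [by apply: val_inj | by move: (H 0 isT isT) | by move: (H 1 isT isT)
  | by move: (H 2 isT isT) | by move: (H 3 isT isT) | by move: (H 4 isT isT)].
Qed.

Lemma Sf_sub_eq (f g : {ffun 'I_K -> 'I_4}) : Sf g \subset Sf f -> g = f.
Proof.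
move=> sub; apply/ffunP => i; apply: opt_incl => r hr og.
by rewrite -(mem_Sf f i hr); apply: (subsetP sub); rewrite mem_Sf.
Qed.

Lemma cd_sub (S : {set V}) : connected_dominating edge S ->
  exists g : {ffun 'I_K -> 'I_4}, Sf g \subset S.
Proof.
move=> H; have sS := s_in H.
have [g hg] := fin_all_exists (fun i => local_opt i H).
exists (finfun g); apply/subsetP => v; rewrite inE.
case: (boolP (isS v)) => hv /=.
  by move: hv; rewrite isSE => /eqP ->.
rewrite ffunE => ho; rewrite (vtxE hv); apply: hg => //; by rewrite ltn_mod.
Qed.

Lemma min_set :
  [set S | minimal_cds edge S] = Sf @: [set: {ffun 'I_K -> 'I_4}].
Proof.
apply/setP => S; rewrite inE; apply/idP/imsetP.
- case/andP => cd /forallP mn; have [g sub] := cd_sub cd.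
  exists g; first by rewrite inE.
  apply/eqP; rewrite eqEsubset sub andbT; apply/negPn/negP => ns.
  move/implyP: (mn (Sf g)); rewrite properE sub ns => /(_ isT).
  by rewrite Sf_cd.
- case => f _ ->; rewrite /minimal_cds Sf_cd /=.
  apply/forallP => S'; apply/implyP => pr; apply/negP => cd'.
  have [g sub] := cd_sub cd'.
  have E := Sf_sub_eq (subset_trans sub (proper_sub pr)).
  by move: pr; rewrite properE -E sub andbF.
Qed.

Lemma num_cds : num_minimal_cds edge = 4 ^ K.
Proof.
rewrite /num_minimal_cds min_set card_imset ?cardsT ?card_ffun ?card_ord //.
by move=> f g E; apply: Sf_sub_eq; rewrite E subxx.
Qed.


Lemma toS (x : V) : connect edge x sv.
Proof.
case: (boolP (isS x)) => hx.
  by move: hx; rewrite isSE => /eqP ->.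
have hr0 : x %% 5 < 5 by rewrite ltn_mod.
rewrite (vtxE hx); move: (cp x) (x %% 5) hr0 => i r hr.
have e0 : connect edge (vtx i 0) sv by apply: connect1; rewrite edge_sym edge_s_vtx.
have e1 : connect edge (vtx i 1) sv by apply: connect1; rewrite edge_sym edge_s_vtx.
have st : forall r r', r < 5 -> r' < 5 -> radj r r' -> connect edge (vtx i r') sv ->
   connect edge (vtx i r) sv.
  by move=> a b ha hb ad; apply: connect_trans; apply: connect1; rewrite edge_vtx // eqxx.
case: r hr => [|[|[|[|[|r]]]]] // _.
- exact: (st 2 1).
- exact: (st 3 0).
- by apply: (st 4 3) => //; apply: (st 3 0).
Qed.

Lemma edge_connected : connected_graph edge.
Proof.
move=> x y; apply: connect_trans (toS x) _.
by rewrite (sym_connect_sym edge_sym) toS.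
Qed.

Definition rank (r : nat) : nat :=
  match r with 0 => 3 | 1 => 4 | 2 => 1 | 3 => 2 | _ => 0 end.
Definition key (v : V) : nat := if isS v then 5 else rank (v %% 5).

Lemma key_vtx i r : r < 5 -> key (vtx i r) = rank r.
Proof. by move=> hr; rewrite /key isS_vtx // mod_vtx. Qed.
Lemma key_sv : key sv = 5.
Proof. by rewrite /key isS_sv. Qed.
Lemma key_le v : key v <= 5.
Proof. rewrite /key; case: ifP => // _; case: (v %% 5) => [|[|[|[|[|r]]]]] //. Qed.

Lemma nbr2 (x : V) : exists a b : V, forall y, edge x y -> key x <= key y ->
  (y == a) || (y == b).
Proof.
case: (boolP (isS x)) => hx.
  exists sv, sv => y; move: hx; rewrite isSE => /eqP ->; rewrite key_sv.
  case: (boolP (isS y)) => hy.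
    by move: hy; rewrite isSE => ->.
  rewrite (vtxE hy) edge_s_vtx ?ltn_mod // key_vtx ?ltn_mod //.
  by case: (y %% 5) => [|[|[|[|[|r]]]]].
have hr0 : x %% 5 < 5 by rewrite ltn_mod.
rewrite (vtxE hx); move: (cp x) (x %% 5) hr0 => i r hr.
have gen : forall a b : V, (forall r', r' < 5 -> radj r r' -> rank r <= rank r' ->
     (vtx i r' == a) || (vtx i r' == b)) -> (r < 2 -> (sv == a) || (sv == b)) ->
   forall y, edge (vtx i r) y -> key (vtx i r) <= key y -> (y == a) || (y == b).
  move=> a b h1 h2 y ey; rewrite key_vtx //.
  move/edge_vtx_any: ey => /(_ hr) /orP[/andP[hy hr2] _|/and3P[hy /eqP hc ad]].
    by move: hy; rewrite isSE => /eqP ->; apply: h2.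
  rewrite (vtxE hy) hc key_vtx ?ltn_mod //; apply: h1 => //; by rewrite ltn_mod.
case: r hr gen => [|[|[|[|[|r]]]]] // _ gen.
- exists (vtx i 1), sv; apply: gen; last by rewrite eqxx orbT.
  by move=> [|[|[|[|[|r']]]]] //= _ _ _; rewrite eqxx.
- exists sv, sv; apply: gen; last by rewrite eqxx.
  by move=> [|[|[|[|[|r']]]]].
- exists (vtx i 1), (vtx i 1); apply: gen => //.
  by move=> [|[|[|[|[|r']]]]] //= _ _ _; rewrite eqxx.
- exists (vtx i 0), (vtx i 0); apply: gen => //.
  by move=> [|[|[|[|[|r']]]]] //= _ _ _; rewrite eqxx.
- exists (vtx i 2), (vtx i 3); apply: gen => //.
  by move=> [|[|[|[|[|r']]]]] //= _ _ _; rewrite eqxx ?orbT.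
Qed.

Lemma edge_degen : two_degenerate edge.
Proof.
set leT := fun u v : V => key u <= key v.
have tot : total leT by move=> u v; apply: leq_total.
have tr : transitive leT by move=> u v w; apply: leq_trans.
exists (sort leT (enum V)); split; first by rewrite perm_sort.
move=> s1 s2 x E.
have := sort_sorted tot (enum V); rewrite E sorted_cat_cons => /andP[_ pth].
have al := order_path_min tr pth.
have un : uniq (x :: s2).
  have : uniq (s1 ++ x :: s2) by rewrite -E sort_uniq enum_uniq.
  by rewrite cat_uniq => /and3P[_ _].
have [a [b hab]] := nbr2 x.
rewrite -size_filter.
apply: (@leq_trans (size [:: a; b])) => //.
apply: uniq_leq_size; first by rewrite filter_uniq //; case/andP: un.
move=> y; rewrite mem_filter => /andP[ey ys].
rewrite !inE; apply: hab => //.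
by move/allP: al => /(_ y ys).
Qed.

End G.

Lemma numeric k : ((13195%:R / 10000%:R : rat) ^+ (5 * k) <= ((4 ^ k)%N)%:R)%R.
Proof.
rewrite GRing.exprM GRing.natrX; apply: Num.Theory.lerXn2r; rewrite ?Num.Theory.nnegrE; lra.
Qed.

Theorem mainTheorem15 :
  forall k : nat, 2 <= k ->
  exists e : rel 'I_(5 * k + 1),
    [/\ simple_graph e, connected_graph e, two_degenerate e,
        num_minimal_cds e = 4 ^ k
      & (((13195%:R / 10000%:R : rat) ^+ (5 * k)) <= ((4 ^ k)%N)%:R)%R].
Proof.
case=> [|[|k']] // _.
exists (@edge k'); split.
- split; [exact: edge_sym | exact: edge_irr].
- exact: edge_connected.
- exact: edge_degen.
- exact: num_cds.
- exact: numeric.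
Qed.
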